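(* Let $n \geq 8$ be an integer. Then the class $\mathcal{Q}$ of functions on $\mathbb{R}^n$ (defined in the context) is empty. That is, there is no function $Q:\mathbb{R}^n\to\mathbb{R}$ of the form $Q(x)=x^TMx$ such that (a) $M\in\mathbb{R}^{n\times n}$ is nonzero, symmetric and nonnegative definite; (b) $Q(Ax)\le Q(x)$ for every $A\in\mathcal{A}$ and every $x\in\mathbb{R}^n$; and (c) $Q(\mathbf{e})=0$.
   Context: Fix a positive integer $n$. Let $\mathbf{e}\in\mathbb{R}^n$ be the vector with all components equal to $1$. A square matrix is stochastic if it is entrywise nonnegative and each row sums to $1$. Let $\mathcal{A}\subset\mathbb{R}^{n\times n}$ be the set of stochastic matrices $A=(a_{ij})$ such that: (i) $a_{ii}>0$ for all $i$; (ii) all positive entries in any given row of $A$ are equal; (iii) $a_{ij}>0$ if and only if $a_{ji}>0$; (iv) the graph on vertex set $\{1,\dots,n\}$ with edge set $\{(i,j): a_{ij}>0\}$ is connected. (These are exactly the matrices of one iteration $x\mapsto Ax$ of the equal-neighbor averaging algorithm on a symmetric connected graph with self-loops, where each node replaces its value by the unweighted average of its neighbors' values, including its own.) The class $\mathcal{Q}$ consists of all functions $Q:\mathbb{R}^n\to\mathbb{R}$ of the form $Q(x)=x^TMx$ where (a) $M$ is nonzero, symmetric and nonnegative definite; (b) $Q(Ax)\le Q(x)$ for all $A\in\mathcal{A}$ and $x\in\mathbb{R}^n$; (c) $Q(\mathbf{e})=0$. *)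

(* Defs.v *)
From mathcomp Require Import all_boot all_order all_algebra.
From mathcomp Require Import reals.
Set Implicit Arguments. Unset Strict Implicit. Unset Printing Implicit Defensive.
Import Order.TTheory GRing.Theory Num.Theory.
Local Open Scope ring_scope.

Definition stochastic (R : realType) (n : nat) (A : 'M[R]_n) : Prop :=
  (forall i j, 0 <= A i j) /\ (forall i, \sum_(j < n) A i j = 1).

Definition in_classA (R : realType) (n : nat) (A : 'M[R]_n) : Prop :=
  [/\ stochastic A,
      (forall i, 0 < A i i),
      (forall i j k, 0 < A i j -> 0 < A i k -> A i j = A i k),
      (forall i j, (0 < A i j) <-> (0 < A j i))
    & (forall i j, connect (fun a b : 'I_n => 0 < A a b) i j)].

Definition qform (R : realType) (n : nat) (M : 'M[R]_n) (x : 'cV[R]_n) : R :=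
  (x^T *m M *m x) ord0 ord0.

Definition nonneg_definite (R : realType) (n : nat) (M : 'M[R]_n) : Prop :=
  forall x : 'cV[R]_n, 0 <= qform M x.

Definition in_classQ (R : realType) (n : nat) (M : 'M[R]_n) : Prop :=
  [/\ M != 0, M^T = M, nonneg_definite M,
      (forall (A : 'M[R]_n) (x : 'cV[R]_n), in_classA A ->
          qform M (A *m x) <= qform M x)
    & qform M (const_mx 1) = 0].

(* Main.v *)
Require Import Defs.
From mathcomp Require Import all_boot all_order all_algebra all_fingroup.
From mathcomp Require Import reals.
From mathcomp Require Import ring lra zify.
Set Implicit Arguments. Unset Strict Implicit. Unset Printing Implicit Defensive.
Import Order.TTheory GRing.Theory Num.Theory.
Local Open Scope ring_scope.

Lemma perm_classA (R : realType) n (A : 'M[R]_n) (s : {perm 'I_n}) :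
  in_classA A -> in_classA (\matrix_(i, j) A (s i) (s j)).
Proof.
case=> [[Ann Asum] Adiag Aeq Asym Acon]; split.
- split=> [i j|i]; rewrite ?mxE //.
  under eq_bigr => j _ do rewrite mxE.
  by rewrite -(Asum (s i)) [RHS](reindex_inj (@perm_inj _ s)).
- by move=> i; rewrite mxE.
- by move=> i j k; rewrite !mxE; apply: Aeq.
- by move=> i j; rewrite !mxE.
- move=> i j.
  have /connectP [p Hp Hl] := Acon (s i) (s j).
  apply/connectP; exists (map (s^-1)%g p).
    have Ep : p = map s (map (s^-1)%g p).
      by rewrite -map_comp -[LHS]map_id; apply: eq_map => x; rewrite /= permKV.
    by move: Hp; rewrite {1}Ep path_map; apply: sub_path => a b /=; rewrite mxE.
  by rewrite -[i in last i _](permK s) last_map -Hl permK.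
Qed.
Lemma qformE (R : realType) n (M : 'M[R]_n) x :
  qform M x = \sum_i \sum_j x i 0 * M i j * x j 0.
Proof.
rewrite /qform mxE exchange_big /=; apply: eq_bigr => j _.
rewrite mxE mulr_suml; apply: eq_bigr => i _; by rewrite !mxE.
Qed.

Lemma sum_ind (R : realType) n (F : 'I_n -> R) i :
  \sum_j F j * (j == i)%:R = F i.
Proof.
rewrite (bigD1 i) //= eqxx mulr1 big1 ?addr0 // => j Hj.
by rewrite (negbTE Hj) mulr0.
Qed.

Lemma sum_indl (R : realType) n (F : 'I_n -> R) i :
  \sum_j (j == i)%:R * F j = F i.
Proof. rewrite -[RHS](sum_ind F i); apply: eq_bigr => j _; by rewrite mulrC. Qed.

Lemma trace_pos (R : realType) n (M : 'M[R]_n) :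
  M != 0 -> M^T = M -> nonneg_definite M -> 0 < \sum_i M i i.
Proof.
move=> Mn0 MT Mnd.
have key (i j : 'I_n) (t : R) : qform M (delta_mx i 0 + t *: delta_mx j 0) =
   M i i + t * M i j + t * M j i + t ^+ 2 * M j j.
  rewrite qformE.
  under eq_bigr => a _ do under eq_bigr => b _ do rewrite !mxE !andbT.
  under eq_bigr => a _ do under eq_bigr => b _ do rewrite mulrDr mulrA.
  under eq_bigr => a _ do rewrite big_split /= !sum_ind.
  rewrite (eq_bigr (fun a => (a == i)%:R * (M a i + M a j * t) + (a == j)%:R * (t * M a i + t * M a j * t))); last by move=> a _; ring.
  rewrite big_split /= !sum_indl; ring.
have diag i : M i i = qform M (delta_mx i 0).
  have := key i i 0; rewrite scale0r addr0 => ->; by rewrite !mul0r expr0n /= mul0r !addr0.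
have dge i : 0 <= M i i by rewrite diag.
rewrite lt_def sumr_ge0 // andbT; apply/negP => /eqP H0.
have d0 i : M i i = 0 by apply: (psumr_eq0P (fun i _ => dge i) H0).
move/negP: Mn0; apply; apply/eqP/matrixP => i j; rewrite mxE.
have Mji : M j i = M i j by rewrite -{1}MT mxE.
have h1 := Mnd (delta_mx i 0 + 1 *: delta_mx j 0).
have h2 := Mnd (delta_mx i 0 + (-1) *: delta_mx j 0).
rewrite key !d0 Mji in h1; rewrite key !d0 Mji in h2. lra.
Qed.

Lemma key (R : realType) n (M : 'M[R]_n) (A : 'M[R]_n) (y : 'cV[R]_n) :
  (1 < n)%N -> in_classQ M -> in_classA A ->
  n%:R * \sum_i ((A *m y) i 0 ^+ 2 - y i 0 ^+ 2)
   - ((\sum_i (A *m y) i 0) ^+ 2 - (\sum_i y i 0) ^+ 2) <= 0.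
Proof.
move=> n1 [Mn0 MT Mnd MA Me] HA.
set z := A *m y.
pose S a b := z a 0 * z b 0 - y a 0 * y b 0.
pose W i j := \sum_(s : {perm 'I_n}) S (s i) (s j).
pose N := \sum_(s : {perm 'I_n}) (1 : R).
have Npos : 0 < N.
  rewrite /N (bigD1 1%g) //=; apply: (@lt_le_trans _ _ 1); first by [].
  by rewrite lerDl sumr_ge0.
have step1 : \sum_i \sum_j M i j * W i j <= 0.
  have e (s : {perm 'I_n}) : (\matrix_(i,j) A (s i) (s j)) *m (\col_i y (s i) 0) = \col_i z (s i) 0.
    apply/matrixP => i k; rewrite !mxE (ord1 k).
    under eq_bigr => j _ do rewrite !mxE.
    by rewrite [RHS](reindex_inj (@perm_inj _ s)).
  have : \sum_(s : {perm 'I_n}) (qform M (\col_i z (s i) 0) - qform M (\col_i y (s i) 0)) <= 0.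
    apply: sumr_le0 => s _; rewrite subr_le0 -e; apply: MA; exact: perm_classA.
  suff -> : \sum_(s : {perm 'I_n}) (qform M (\col_i z (s i) 0) - qform M (\col_i y (s i) 0))
           = \sum_i \sum_j M i j * W i j by [].
  rewrite /W.
  under [RHS]eq_bigr => i _ do (under eq_bigr => j _ do rewrite mulr_sumr; rewrite exchange_big).
  rewrite [RHS]exchange_big; apply: eq_bigr => s _.
  rewrite !qformE -sumrB; apply: eq_bigr => i _; rewrite -sumrB; apply: eq_bigr => j _.
  rewrite /S /z !mxE; ring.
have Winv (t : {perm 'I_n}) i j : W (t i) (t j) = W i j.
  rewrite /W [RHS](reindex_inj (mulgI t)) /=; apply: eq_bigr => s _; by rewrite !permM.
have lt0 : (0 < n)%N by apply: ltn_trans n1.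
pose i0 := Ordinal lt0. pose i1 := Ordinal n1.
have i01 : i0 != i1 by [].
have Wdiag i : W i i = W i0 i0 by rewrite -[RHS](Winv (tperm i0 i)) tpermL.
have Woff i j : i != j -> W i j = W i0 i1.
  move=> ij; pose j1 := tperm i0 i i1.
  have ij1 : i != j1.
    apply/eqP => E; have : tperm i0 i i0 = tperm i0 i i1 by rewrite tpermL.
    by move/perm_inj => /eqP; rewrite (negbTE i01).
  rewrite -[RHS](Winv (tperm i0 i * tperm j1 j)%g) !permM tpermL -/j1 tpermL tpermD //.
  all: try done. all: try by rewrite eq_sym.
pose D := W i0 i0 - W i0 i1.
have WE (i j : 'I_n) : W i j = W i0 i1 + (j == i)%:R * D.
  case: (eqVneq j i) => [->|ji]; first by rewrite Wdiag /D /=; ring.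
  by rewrite Woff 1?eq_sym // mul0r addr0.
have sumM : \sum_i \sum_j M i j = 0.
  apply: etrans Me; rewrite qformE; apply: eq_bigr => i _; apply: eq_bigr => j _; by rewrite !mxE mul1r mulr1.
have step2 : \sum_i \sum_j M i j * W i j = D * \sum_i M i i.
  under eq_bigr => i _ do under eq_bigr => j _ do rewrite WE mulrDr mulrCA.
  under eq_bigr => i _ do rewrite big_split /= sum_indl -mulr_suml.
  rewrite big_split /= -mulr_suml sumM mul0r add0r mulr_sumr.
  by apply: eq_bigr => i _; rewrite mulrC.
have trS : \sum_i W i i = N * \sum_i S i i.
  rewrite /W exchange_big /N mulr_suml; apply: eq_bigr => s _.
  by rewrite mul1r [RHS](reindex_inj (@perm_inj _ s)).
have allS : \sum_i \sum_j W i j = N * \sum_i \sum_j S i j.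
  rewrite /W /N mulr_suml.
  under eq_bigr => i _ do rewrite exchange_big.
  rewrite exchange_big; apply: eq_bigr => s _; rewrite mul1r.
  rewrite [RHS](reindex_inj (@perm_inj _ s)); apply: eq_bigr => i _.
  by rewrite [RHS](reindex_inj (@perm_inj _ s)).
have trW : \sum_i W i i = n%:R * (W i0 i1 + D).
  under eq_bigr => i _ do rewrite WE eqxx mul1r.
  by rewrite sumr_const card_ord mulr_natl.
have allW : \sum_i \sum_j W i j = n%:R * (n%:R * W i0 i1 + D).
  under eq_bigr => i _ do under eq_bigr => j _ do rewrite WE.
  under eq_bigr => i _ do rewrite big_split /= sumr_const card_ord sum_indl.
  by rewrite sumr_const card_ord; ring.
have Hsz : \sum_i \sum_j S i j = (\sum_i z i 0) ^+ 2 - (\sum_i y i 0) ^+ 2.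
  rewrite !expr2 !mulr_suml -sumrB; apply: eq_bigr => i _.
  by rewrite !mulr_sumr -sumrB.
have Hts : \sum_i S i i = \sum_i (z i 0 ^+ 2 - y i 0 ^+ 2).
  by apply: eq_bigr => i _; rewrite /S !expr2.
have trpos := trace_pos Mn0 MT Mnd.
have HD : D <= 0.
  have := step1; rewrite step2 => H.
  rewrite leNgt; apply/negP => Dp; move: H; rewrite leNgt => /negP; apply.
  exact: mulr_gt0.
have n1R : 1 < (n%:R : R) by rewrite ltr1n.
rewrite -Hsz -Hts.
set a := \sum_i S i i in trS Hts *.
set b := \sum_i \sum_j S i j in allS Hsz *.
have E1 : N * (n%:R * a - b) = n%:R * (n%:R - 1) * D.
  have ha : N * a = n%:R * (W i0 i1 + D) by rewrite -trS trW.
  have hb : N * b = n%:R * (n%:R * W i0 i1 + D) by rewrite -allS allW.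
  rewrite mulrBr mulrCA ha hb; ring.
have : N * (n%:R * a - b) <= 0.
  rewrite E1; apply: mulr_ge0_le0 => //; apply: mulr_ge0; rewrite ?subr_ge0 ?ler0n // ltW //.
by rewrite pmulr_rle0.
Qed.

Local Close Scope ring_scope.
Definition adj0 (k l : nat) : bool := ((k == 0) && (0 < l <= 4)) || ((k == 4) && (5 <= l)).
Definition adjn (k l : nat) : bool := [|| k == l, adj0 k l | adj0 l k].
Lemma adj_big i k : (5 <= k)%N -> adjn i k = (i == k) || (i == 4).
Proof. rewrite /adjn /adj0 => h. apply/idP/idP; lia. Qed.
Lemma adj_leaf i k : (5 <= i)%N -> adjn i k = (i == k) || (k == 4).
Proof. rewrite /adjn /adj0 => h. apply/idP/idP; lia. Qed.
Lemma adj_sym i k : adjn i k = adjn k i.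
Proof. rewrite /adjn /adj0. apply/idP/idP; lia. Qed.

Local Open Scope ring_scope.

Lemma split5 (R : realType) N (F : nat -> R) : (5 <= N)%N ->
  \sum_(i < N) F i = F 0%N + F 1%N + F 2%N + F 3%N + F 4%N + \sum_(5 <= k < N) F k.
Proof.
move=> h; rewrite -(big_mkord xpredT) (big_cat_nat _ (n := 5)) //=.
by do 5 rewrite big_ltn //; rewrite (big_geq (m := 5) (n := 5)) // addr0 !addrA.
Qed.

Lemma sum_pt (R : realType) N (F : nat -> R) i : (5 <= i < N)%N ->
  \sum_(5 <= k < N) (k == i)%:R * F k = F i.
Proof.
case/andP=> h1 h2.
rewrite (big_cat_nat _ (n := i)) ?(ltnW h2) //= (big_cat_nat _ (m := i) (n := i.+1) (p := N)) //= big_nat1 eqxx mul1r.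
rewrite !big1_seq ?add0r ?addr0 // => k; rewrite mem_index_iota => hk;
  rewrite (_ : (k == i) = false) ?mul0r //; lia.
Qed.

Definition nbval (R : realType) N (F : nat -> R) (k : nat) : R :=
  if k == 0%N then F 0%N + F 1%N + F 2%N + F 3%N + F 4%N
  else if (k <= 3)%N then F k + F 0%N
  else if k == 4%N then F 0%N + F 4%N + \sum_(5 <= l < N) F l
  else F 4%N + F k.

Lemma nbsum (R : realType) N (F : nat -> R) (i : 'I_N) : (5 <= N)%N ->
  \sum_(j < N) (adjn i j)%:R * F j = nbval N F i.
Proof.
move=> hN; rewrite (split5 (fun j => (adjn i j)%:R * F j)) //.
case: i => k hk /=; rewrite /nbval.
have [k5|k5] := leqP 5 k.
  rewrite !adj_leaf // (_ : (k == 0)%N = false); last by lia.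
  rewrite (_ : (k <= 3)%N = false); last by lia.
  rewrite (_ : (k == 4)%N = false); last by lia.
  rewrite (eq_big_nat _ _ (F2 := fun l => (l == k)%:R * F l)); last first.
    by move=> l hl; rewrite adj_leaf // (_ : (l == 4)%N = false) ?orbF 1?eq_sym //; lia.
  have e1 : (k == 1%N) = false by lia.
  have e2 : (k == 2%N) = false by lia.
  have e3 : (k == 3%N) = false by lia.
  by rewrite e1 e2 e3 /= sum_pt ?k5 // !mul0r mul1r !add0r.
have z0 (j : nat) : (j <= 3)%N -> \sum_(5 <= l < N) (adjn j l)%:R * F l = 0.
  move=> hj; rewrite big1_seq // => l; rewrite mem_index_iota => hl.
  have e : adjn j l = false by rewrite adj_big; lia.
  by rewrite e mul0r.
have z4 : \sum_(5 <= l < N) (adjn 4 l)%:R * F l = \sum_(5 <= l < N) F l.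
  apply: eq_big_nat => l hl; have e : adjn 4 l by rewrite adj_big; lia.
  by rewrite e mul1r.
case: k hk k5 => [|[|[|[|[|k]]]]] //= hk k5; rewrite ?z4 ?z0 //.
all: rewrite !mul1r ?mul0r ?addr0 ?add0r ?addr0 //; exact: addrC.
Qed.

Definition degn (N k : nat) : nat := if k == 0%N then 5%N else if k == 4%N then (N - 3)%N else 2%N.

Definition Amat (R : realType) N : 'M[R]_N :=
  \matrix_(i, j) if adjn i j then ((degn N i)%:R)^-1 else 0.

Lemma degn_pos N k : (5 <= N)%N -> (0 < degn N k)%N.
Proof. rewrite /degn => h; case: ifP => //; case: ifP => //; lia. Qed.

Lemma AmatE (R : realType) N (i j : 'I_N) :
  Amat R N i j = (adjn i j)%:R * ((degn N i)%:R)^-1.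
Proof. by rewrite mxE; case: (adjn i j); rewrite ?mul1r ?mul0r. Qed.

Lemma Apos (R : realType) N (i j : 'I_N) : (5 <= N)%N -> (0 < Amat R N i j) = adjn i j.
Proof.
move=> h; rewrite mxE; case: (adjn i j); last by rewrite ltxx.
by rewrite invr_gt0 ltr0n degn_pos.
Qed.

Lemma degsum (R : realType) N (i : 'I_N) : (5 <= N)%N ->
  \sum_(j < N) (adjn i j)%:R = (degn N i)%:R :> R.
Proof.
move=> h; rewrite -[LHS](eq_bigr _ (fun j _ => mulr1 _)) (nbsum (fun _ => (1:R))) //.
rewrite /nbval /degn; case: i => k hk /=.
case: (boolP (k == 0%N)) => [_|k0].
  by rewrite -[5%N]/(1+1+1+1+1)%N !natrD.
have [k4|k4] := eqVneq k 4%N.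
  rewrite k4 /= sumr_const_nat (_ : (N - 3 = 2 + (N - 5))%N); last by lia.
  by rewrite natrD -[2%N]/(1+1)%N natrD.
by case: ifP; rewrite -[2%N]/(1+1)%N natrD.
Qed.

Lemma Amat_classA (R : realType) N : (5 <= N)%N -> in_classA (Amat R N).
Proof.
move=> hN; split.
- split=> [i j|i].
    by rewrite AmatE mulr_ge0 // invr_ge0 ler0n.
  under eq_bigr => j _ do rewrite AmatE.
  rewrite -mulr_suml degsum // mulfV // pnatr_eq0 -lt0n degn_pos //.
- by move=> i; rewrite Apos // /adjn eqxx.
- move=> i j k; rewrite !Apos // => hj hk; by rewrite !mxE hj hk.
- by move=> i j; rewrite !Apos // adj_sym.
have ce : connect (fun a b : 'I_N => 0 < Amat R N a b) =2 connect (fun a b : 'I_N => adjn a b).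
  by apply: eq_connect => a b; rewrite Apos.
have lt0 : (0 < N)%N by lia.
have lt4 : (4 < N)%N by lia.
pose o0 := Ordinal lt0. pose o4 := Ordinal lt4.
have symA : symmetric (fun a b : 'I_N => adjn a b) by move=> a b; rewrite adj_sym.
have c0 (i : 'I_N) : connect (fun a b : 'I_N => adjn a b) i o0.
  have [i5|i5] := leqP 5 i.
    apply: (connect_trans (y := o4)); apply: connect1; rewrite /= /adjn /adj0; lia.
  case: (val i =P 0%N) => [e|e].
    by rewrite (_ : i = o0) ?connect0 //; apply: val_inj.
  apply: connect1; rewrite /= /adjn /adj0; lia.
move=> i j; rewrite ce; apply: (connect_trans (c0 i)).
by rewrite (sym_connect_sym symA).
Qed.

Definition yn (R : realType) (k : nat) : R :=
  if k == 0%N then -3 else if (k <= 3)%N then -1 else if k == 4%N then 3 else 1.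

Definition zn (R : realType) N (k : nat) : R := ((degn N k)%:R)^-1 * nbval N (@yn R) k.

Lemma Ay (R : realType) N (i : 'I_N) : (5 <= N)%N ->
  (Amat R N *m \col_j yn R j) i 0 = zn R N i.
Proof.
move=> h; rewrite mxE /zn -(nbsum _ _ h) mulr_sumr; apply: eq_bigr => j _.
by rewrite AmatE mxE mulrAC mulrC.
Qed.

Lemma concrete (R : realType) N : (8 <= N)%N ->
  0 < N%:R * \sum_(i < N) ((Amat R N *m \col_(j < N) yn R j) i 0 ^+ 2 - (\col_(j < N) yn R j) i 0 ^+ 2)
   - ((\sum_(i < N) (Amat R N *m \col_(j < N) yn R j) i 0) ^+ 2 - (\sum_(i < N) (\col_(j < N) yn R j) i 0) ^+ 2).
Proof.
move=> hN; have h5 : (5 <= N)%N by lia.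
under eq_bigr => i _ do rewrite Ay // mxE.
under [X in _ - (X ^+ 2 - _)]eq_bigr => i _ do rewrite Ay //.
under [X in _ - (_ - X ^+ 2)]eq_bigr => i _ do rewrite mxE.
rewrite (split5 (fun k => zn R N k ^+ 2 - yn R k ^+ 2)) //.
rewrite (split5 (zn R N)) // (split5 (@yn R)) //.
have tl (F : nat -> R) c : (forall k, (5 <= k)%N -> F k = c) -> \sum_(5 <= k < N) F k = c *+ (N - 5).
  move=> hF; rewrite -sumr_const_nat; apply: eq_big_nat => k hk; apply: hF; lia.
have yl k : (5 <= k)%N -> yn R k = 1.
  move=> hk; have e0 : (k == 0%N) = false by lia.
  have e3 : (k <= 3)%N = false by lia.
  have e4 : (k == 4%N) = false by lia.
  by rewrite /yn e0 e3 e4.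
have zl k : (5 <= k)%N -> zn R N k = 2.
  move=> hk; have e0 : (k == 0%N) = false by lia.
  have e3 : (k <= 3)%N = false by lia.
  have e4 : (k == 4%N) = false by lia.
  by rewrite /zn /nbval /degn e0 e3 e4 (yl k hk) /yn /=; field.
have sy : \sum_(5 <= k < N) yn R k = 1 *+ (N - 5) by apply: tl.
have s1 : \sum_(5 <= k < N) (zn R N k ^+ 2 - yn R k ^+ 2) = (2 ^+ 2 - 1 ^+ 2) *+ (N - 5).
  by apply: tl => m hm; rewrite zl ?yl.
have s2 : \sum_(5 <= k < N) zn R N k = 2 *+ (N - 5) by apply: tl => m hm; rewrite zl.
rewrite s1 s2 sy.
have z0 : zn R N 0 = - (3 / 5) by rewrite /zn /nbval /degn /yn /=; field.
have z1 : zn R N 1 = -2 by rewrite /zn /nbval /degn /yn /=; field.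
have z2 : zn R N 2 = -2 by rewrite /zn /nbval /degn /yn /=; field.
have z3 : zn R N 3 = -2 by rewrite /zn /nbval /degn /yn /=; field.
have z4 : zn R N 4 = ((N - 3)%:R)^-1 * (N - 5)%:R.
  by rewrite /zn /nbval /degn sy /yn /=; congr (_ * _); move: ((N - 5)%:R) => t; lra.
have y0 : yn R 0 = -3 by [].
have y1 : yn R 1 = -1 by [].
have y2 : yn R 2 = -1 by [].
have y3 : yn R 3 = -1 by [].
have y4 : yn R 4 = 3 by [].
rewrite z0 z1 z2 z3 z4 y0 y1 y2 y3 y4.
have eN : N%:R = (N - 5)%:R + 5 :> R by rewrite -[5]/(5%:R) -natrD subnK.
have eN3 : (N - 3)%:R = (N - 5)%:R + 2 :> R.
  by rewrite -[2]/(2%:R) -natrD (_ : (N - 5 + 2 = N - 3)%N) //; lia.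
have mn (x : R) : x *+ (N - 5) = x * (N - 5)%:R by rewrite mulr_natr.
rewrite [(2 ^+ 2 - 1 ^+ 2) *+ _]mn [2 *+ _]mn eN eN3.
have : (3 : R) <= (N - 5)%:R by rewrite ler_nat; lia.
move: (N - 5)%:R => q hq.
have hq2 : q + 2 != 0 by rewrite lt0r_neq0 //; lra.
rewrite [ltRHS](_ : _ = (594 * q ^+ 3 + 962 * q ^+ 2 - 4440 * q - 7776) / (25 * (q + 2) ^+ 2)); last first.
  by field.
apply: divr_gt0; last by apply: mulr_gt0 => //; apply: exprn_gt0; lra.
nra.
Qed.

Theorem theorem2 (R : realType) (n : nat) : (8 <= n)%N ->
  ~ (exists M : 'M[R]_n, in_classQ M).
Proof.
move=> hn [M HM].
have h5 : (5 <= n)%N by apply: leq_trans hn.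
have h1 : (1 < n)%N by apply: leq_trans hn.
have := @key R n M (Amat R n) (\col_(j < n) yn R j) h1 HM (Amat_classA R h5).
by rewrite leNgt (concrete R hn).
Qed.
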